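(* Let $\Sigma=(X,U,F)$ be a system and $Q\subset X$ be controlled invariant. Then \[h_{inv}(Q)\le\inf_{V}\log\rho(M_{Q,V}),\] where the infimum is over all finite $V\subset U$ that cover $Q$, and $\rho$ denotes the spectral radius.
   Context: A system is a triple $\Sigma=(X,U,F)$ where $X,U$ are nonempty sets and $F:X\times U\rightrightarrows X$ is a set-valued map with $F(x,u)\neq\emptyset$ for all $(x,u)$; for $A\subset X$, $F(A,u)=\bigcup_{x\in A}F(x,u)$. $Q\subset X$ is controlled invariant if for every $x\in Q$ there is $u\in U$ with $F(x,u)\subset Q$. For $u\in U$ put $Q_u=\{x\in Q:F(x,u)\subset Q\}$. Elements of $U^n$ are written $\omega=\omega_0\cdots\omega_{n-1}$, $\omega_{[0,i]}=\omega_0\cdots\omega_i$. A set $S\subset U^n$ is an admissible family of length $n$ for $Q$ if (a) $\omega'_0=\omega''_0$ for all $\omega',\omega''\in S$, and (b) there exists $x\in Q$ such that for every $\omega\in S$, with $I^0_\omega(x)=\{x\}$: for all $i=0,\dots,n-2$, $F(I^i_\omega(x),\omega_i)\subset\bigcup_{\omega'\in S,\ \omega'_{[0,i]}=\omega_{[0,i]}}Q_{\omega'_{i+1}}$ and $I^{i+1}_\omega(x):=F(I^i_\omega(x),\omega_i)\cap Q_{\omega_{i+1}}\neq\emptyset$; and $I^n_\omega(x):=F(I^{n-1}_\omega(x),\omega_{n-1})\subset Q$. Let $AF^n(Q)$ be the set of such families and $Q_S$ the set of $x\in Q$ satisfying (b). A set $\mathscr{S}\subset U^n$ is $(n,Q)$-spanning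 if $Q\subset\bigcup_{S\subset\mathscr{S},\,S\in AF^n(Q)}Q_S$; $r_{inv}(n,Q)$ is the infimum of $\sharp\mathscr{S}$ over such sets, and $h_{inv}(Q)=\limsup_{n\to\infty}\frac1n\log r_{inv}(n,Q)$ ($\log$ base $2$). A set $V\subset U$ is a cover of $Q$ if $Q\subset\bigcup_{a\in V}Q_a$. The admissible matrix $M_{Q,V}=(M_{ab})_{a,b\in V}$ has $M_{ab}=1$ if there exists $x\in Q_a$ with $F(x,a)\cap Q_b\neq\emptyset$, and $M_{ab}=0$ otherwise. The infimum of the empty set is $+\infty$. *)

(* Defs.v *)
From HB Require Import structures.
From mathcomp Require Import all_boot all_order all_algebra.
From mathcomp Require Import all_classical all_reals.
From mathcomp Require Import ereal sequences exp.
From mathcomp.real_closed Require Import complex.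

Set Implicit Arguments.
Unset Strict Implicit.
Unset Printing Implicit Defensive.

Import Order.TTheory GRing.Theory Num.Theory.
Local Open Scope classical_set_scope.
Local Open Scope ring_scope.

Section ControlSystems.
Variables (X U : Type) (F : X -> U -> set X).

Definition Fimg (A : set X) (u : U) : set X :=
  [set y | exists2 x, A x & F x u y].

Definition controlled_invariant (Q : set X) : Prop :=
  forall x, Q x -> exists u, F x u `<=` Q.

Definition Qu (Q : set X) (u : U) : set X := [set x | Q x /\ F x u `<=` Q].

Variable n : nat.
(* words omega in U^n are functions 'I_n -> U; omega_i is w i *)

(* F(A, omega_i), only meaningful for i < n (set0 otherwise, never used) *)
Definition stepF (w : 'I_n -> U) (A : set X) (i : nat) : set X :=
  match (insub i : option 'I_n) with
  | Some j => Fimg A (w j) | None => set0 end.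

(* Q_{omega_i}, only meaningful for i < n *)
Definition stepQ (Q : set X) (w : 'I_n -> U) (i : nat) : set X :=
  match (insub i : option 'I_n) with
  | Some j => Qu Q (w j) | None => set0 end.

Fixpoint Iset (Q : set X) (w : 'I_n -> U) (x : X) (i : nat) : set X :=
  match i with
  | 0 => [set x]
  | i'.+1 => stepF w (Iset Q w x i') i' `&` stepQ Q w i
  end.

Definition same_prefix (w' w : 'I_n -> U) (i : nat) : Prop :=
  forall j : 'I_n, (j <= i)%N -> w' j = w j.

(* condition (b) of the definition of admissible family, at the point x *)
Definition adm_point (Q : set X) (S : set ('I_n -> U)) (x : X) : Prop :=
  Q x /\
  forall w, S w ->
    (forall i, (i.+2 <= n)%N ->
        stepF w (Iset Q w x i) i `<=`
          \bigcup_(w' in [set w' | S w' /\ same_prefix w' w i]) stepQ Q w' i.+1)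
    /\ (forall i, (i.+2 <= n)%N -> Iset Q w x i.+1 !=set0)
    /\ (forall i, i.+1 = n -> stepF w (Iset Q w x i) i `<=` Q).

Definition QS (Q : set X) (S : set ('I_n -> U)) : set X := adm_point Q S.

Definition admissible (Q : set X) (S : set ('I_n -> U)) : Prop :=
  S !=set0 /\
  (forall w' w'', S w' -> S w'' -> forall j : 'I_n, val j = 0%N -> w' j = w'' j) /\
  QS Q S !=set0.

Definition spanning (Q : set X) (Sc : set ('I_n -> U)) : Prop :=
  Q `<=` \bigcup_(S in [set S | S `<=` Sc /\ admissible Q S]) QS Q S.

End ControlSystems.

Definition has_card (T : Type) (A : set T) (k : nat) : Prop :=
  exists f : 'I_k -> T, injective f /\ range f = A.

Section Entropy.
Variable R : realType.
Local Open Scope ereal_scope.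

Definition elog2 (r : \bar R) : \bar R :=
  match r with
  | +oo => +oo
  | -oo => -oo
  | r'%:E => if r' == 0%R then -oo else (ln r' / ln 2)%:E
  end.

(* r_inv(n,Q): infimum of the cardinalities of (n,Q)-spanning sets
   (+oo if there is no finite one) *)
Definition r_inv (X U : Type) (F : X -> U -> set X) (n : nat) (Q : set X) : \bar R :=
  ereal_inf [set (k%:R)%:E | k in
     [set k | exists Sc : set ('I_n -> U), spanning F Q Sc /\ has_card Sc k]].

Definition h_inv (X U : Type) (F : X -> U -> set X) (Q : set X) : \bar R :=
  limn_esup (fun n => ((n%:R)^-1)%:E * elog2 (r_inv F n Q)).

(* spectral radius of a complex square matrix: max modulus of eigenvalues
   (0 for the empty matrix) *)
Definition spectral_radius (k : nat) (A : 'M[R[i]]_k) : R :=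
  sup ([set 0%R] `|` [set Normc.normc l | l in [set l | eigenvalue A l]]).

(* admissible matrix M_{Q,V}, V enumerated injectively by e : 'I_k -> U *)
Definition adm_matrix (X U : Type) (F : X -> U -> set X) (Q : set X)
    (k : nat) (e : 'I_k -> U) : 'M[R[i]]_k :=
  \matrix_(a, b) (if `[< exists x, Qu F Q (e a) x /\ (F x (e a) `&` Qu F Q (e b)) !=set0 >]
                  then 1 else 0)%R.

Definition is_cover (X U : Type) (F : X -> U -> set X) (Q : set X) (V : set U) : Prop :=
  Q `<=` \bigcup_(a in V) Qu F Q a.

End Entropy.

(* Main.v *)
Require Import Defs.
From HB Require Import structures.
From mathcomp Require Import all_boot all_order all_algebra.
From mathcomp Require Import all_classical all_reals.
From mathcomp Require Import ereal sequences exp.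
From mathcomp.real_closed Require Import complex.
From mathcomp Require Import ring lra.
From mathcomp Require Import ereal_normedtype.
Set Implicit Arguments.
Unset Strict Implicit.
Unset Printing Implicit Defensive.
Import Order.TTheory GRing.Theory Num.Theory.
Local Open Scope ring_scope.

Section Rec.
Variable R : rcfType.
Local Notation C := (R[i]).
Local Notation nc := (@Normc.normc R).

Lemma normc_ge0 (x : C) : 0 <= nc x.
Proof. by have := normr_ge0 x; rewrite -ler0c. Qed.

Definition annp (p : {poly C}) (u : nat -> C) :=
  forall n, \sum_(j < size p) p`_j * u (n + j)%N = 0.

Lemma annp_ext (p : {poly C}) u n N : (size p <= N)%N ->
  \sum_(j < size p) p`_j * u (n + j)%N = \sum_(j < N) p`_j * u (n + j)%N.
Proof.
move=> H; rewrite -(subnKC H) big_split_ord /= [X in _ = _ + X]big1 ?addr0 //.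
by move=> i _; rewrite nth_default ?mul0r // leq_addr.
Qed.

Lemma annp_factor (lam : C) q u : annp (('X - lam%:P) * q) u ->
  annp q (fun n => u n.+1 - lam * u n).
Proof.
move=> H n; have := H n.
rewrite (@annp_ext _ _ _ (size q).+1); last first.
  apply: leq_trans (size_polyMleq _ _) _; by rewrite size_XsubC.
rewrite mulrBl.
under eq_bigr => j _ do rewrite coefB coefXM coefCM mulrBl.
rewrite sumrB big_ord_recl /= mul0r add0r.
under [X in _ - X = _]eq_bigr => j _ do rewrite -mulrA.
rewrite -mulr_sumr -(@annp_ext q u n) //.
move=> E; rewrite -[RHS]E.
under eq_bigr => j _ do rewrite mulrBr.
rewrite sumrB mulr_sumr; congr (_ - _); apply: eq_bigr => j _.
  by rewrite add0n /bump /= add1n addnS.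
by rewrite mulrCA.
Qed.

Lemma annp1 u : annp 1 u -> forall n, u n = 0.
Proof.
move=> H n; have := H n; rewrite size_poly1 big_ord1 coef1 /= mul1r addn0 //.
Qed.

Lemma rec_bound (rs : seq C) (s : R) u :
  (forall z, z \in rs -> nc z < s) ->
  annp (\prod_(z <- rs) ('X - z%:P)) u ->
  exists2 D, 0 <= D & forall n, nc (u n) <= D * s ^+ n.
Proof.
elim: rs u => [|lam rs IH] u Hrs Hann.
  rewrite big_nil in Hann; exists 0 => // n; rewrite (annp1 Hann) mul0r Normc.normc0 //.
rewrite big_cons in Hann.
have [D0 D0ge Hv] := IH _ (fun z hz => Hrs z ltac:(by rewrite inE hz orbT)) (annp_factor Hann).
have Hl : nc lam < s by apply: Hrs; rewrite mem_head.
have Hl0 := normc_ge0 lam.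
have s0 : 0 <= s by lra.
have Hd : 0 <= D0 / (s - nc lam) by rewrite divr_ge0 // subr_ge0 ltW.
exists (nc (u 0%N) + D0 / (s - nc lam)).
  by rewrite addr_ge0 // normc_ge0.
have key : D0 <= (s - nc lam) * (nc (u 0%N) + D0 / (s - nc lam)).
  rewrite mulrDr mulrCA divff ?mulr1; last by rewrite subr_eq0 gt_eqF.
  rewrite lerDr mulr_ge0 ?normc_ge0 //; lra.
elim=> [|n IHn]; first by rewrite expr0 mulr1 lerDl.
have -> : u n.+1 = lam * u n + (u n.+1 - lam * u n) by ring.
apply: le_trans (le_normcD _ _) _; rewrite Normc.normcM.
have := Hv n; set vn := nc _ => Hvn.
set D := _ + _ in IHn key *.
have hsn : 0 <= s ^+ n by rewrite exprn_ge0.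
rewrite exprS.
have h1 : nc lam * nc (u n) <= nc lam * (D * s ^+ n) by rewrite ler_wpM2l.
have h2 : D0 * s ^+ n <= (s - nc lam) * D * s ^+ n by rewrite ler_wpM2r.
nra.
Qed.
End Rec.

Section B.
Variable R : rcfType.
Local Notation C := (R[i]).
Local Notation nc := (@Normc.normc R).

Lemma horner_mx_expand k (A : 'M[C]_k.+1) (p : {poly C}) :
  horner_mx A p = \sum_(j < size p) p`_j *: A ^+ j.
Proof.
rewrite -{1}[p]coefK poly_def linear_sum; apply: eq_bigr => j _.
by rewrite linearZ /= rmorphXn /= horner_mx_X.
Qed.

Lemma mat_ann k (A : 'M[C]_k.+1) a b :
  annp (char_poly A) (fun n => (A ^+ n) a b).
Proof.
move=> n.
have E : A ^+ n * horner_mx A (char_poly A) =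
   \sum_(j < size (char_poly A)) (char_poly A)`_j *: A ^+ (n + j).
  rewrite horner_mx_expand mulr_sumr; apply: eq_bigr => j _.
  by rewrite -scalerAr exprD.
rewrite Cayley_Hamilton mulr0 in E.
have := congr1 (fun M : 'M[C]_k.+1 => M a b) E.
rewrite mxE summxE => E2; rewrite [RHS]E2; apply: eq_bigr => j _; by rewrite mxE.
Qed.

Lemma mat_bound k (A : 'M[C]_k.+1) (s : R) : 0 <= s ->
  (forall z, eigenvalue A z -> nc z < s) ->
  exists2 D, 0 <= D & forall n a b, nc ((A ^+ n) a b) <= D * s ^+ n.
Proof.
move=> s0 Hs.
have [rs Hrs] := closed_field_poly_normal (char_poly A).
have mon := char_poly_monic A.
rewrite (monicP mon) scale1r in Hrs.
have H : forall ab : 'I_k.+1 * 'I_k.+1, exists2 D, 0 <= D &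
    forall n, nc ((A ^+ n) ab.1 ab.2) <= D * s ^+ n.
  move=> [a b]; apply: (@rec_bound _ rs); last by rewrite -Hrs; apply: mat_ann.
  move=> z hz; apply: Hs; rewrite eigenvalue_root_char Hrs root_prod_XsubC //.
pose Df := fun ab => projT1 (cid2 (H ab)).
have Df0 ab : 0 <= Df ab by rewrite /Df; case: (cid2 (H ab)).
have DfB ab n : nc ((A ^+ n) ab.1 ab.2) <= Df ab * s ^+ n.
  by rewrite /Df; case: (cid2 (H ab)).
exists (\sum_ab Df ab); first by rewrite sumr_ge0.
move=> n a b; apply: le_trans (DfB (a, b) n) _.
rewrite ler_wpM2r ?exprn_ge0 //.
by rewrite (bigD1 (a, b)) //= lerDl sumr_ge0.
Qed.
End B.

Local Open Scope classical_set_scope.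

Section Span.
Variables (X U : Type) (F : X -> U -> set X).
Hypothesis HF : forall x u, F x u !=set0.
Variable Q : set X.
Variables (k : nat) (e : 'I_k -> U).
Hypothesis Hcov : is_cover F Q (range e).

Definition Eab (a b : 'I_k) : bool :=
  `[< exists x, Qu F Q (e a) x /\ (F x (e a) `&` Qu F Q (e b)) !=set0 >].

Definition validb n (c : {ffun 'I_n -> 'I_k}) : bool :=
  [forall i : 'I_n, forall j : 'I_n, (val j == (val i).+1) ==> Eab (c i) (c j)].

Lemma cover_pt y : Q y -> exists b, Qu F Q (e b) y.
Proof. by move=> /Hcov [_ [b _ <-] hy]; exists b. Qed.

Section Words.
Variable n : nat.
Implicit Types (w : 'I_n -> U).

Lemma stepF_lt w A i (h : (i < n)%N) : stepF F w A i = Fimg F A (w (Ordinal h)).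
Proof. by rewrite /stepF insubT. Qed.

Lemma stepQ_lt w i (h : (i < n)%N) : stepQ F Q w i = Qu F Q (w (Ordinal h)).
Proof. by rewrite /stepQ insubT. Qed.

Lemma Iset_prefix w w' x i : (forall j : 'I_n, (val j <= i)%N -> w j = w' j) ->
  Iset F Q w x i = Iset F Q w' x i.
Proof.
elim: i => [//|i IH] H /=.
rewrite IH; last by move=> j hj; apply: H; apply: leqW.
congr (_ `&` _).
  rewrite /stepF; case: insubP => [j _ hj|//]; rewrite H // hj leqnSn //.
rewrite /stepQ; case: insubP => [j _ hj|//]; rewrite H // hj //.
Qed.

Lemma Iset_subQ w x i (h : (i < n)%N) (h0 : (0 < n)%N) :
  Qu F Q (w (Ordinal h0)) x -> Iset F Q w x i `<=` Qu F Q (w (Ordinal h)).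
Proof.
move=> hx; case: i h => [|i] h /=.
  by move=> y ->; rewrite (_ : Ordinal h = Ordinal h0) //; apply: val_inj.
by move=> y [_]; rewrite stepQ_lt.
Qed.

End Words.

Section Span2.
Variable m : nat.
Variables (x : X) (a0 : 'I_k).
Hypothesis hx : Qu F Q (e a0) x.

Definition upd (c : 'I_m.+1 -> 'I_k) j b : 'I_m.+1 -> 'I_k :=
  fun i => if val i == j.+1 then b else c i.

Definition good (c : 'I_m.+1 -> 'I_k) :=
  c ord0 = a0 /\ forall i, (i < m.+1)%N -> Iset F Q (e \o c) x i !=set0.

Lemma Iset_subQ' c i (h : (i < m.+1)%N) : c ord0 = a0 ->
  Iset F Q (e \o c) x i `<=` Qu F Q (e (c (Ordinal h))).
Proof.
move=> c0; apply: (@Iset_subQ m.+1 (e \o c) x i h isT) => /=.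
by rewrite (_ : Ordinal _ = ord0) ?c0 //; apply: val_inj.
Qed.

Lemma upd_lem c j b y : (j.+1 < m.+1)%N -> c ord0 = a0 ->
  (forall i, (i <= j)%N -> Iset F Q (e \o c) x i !=set0) ->
  stepF F (e \o c) (Iset F Q (e \o c) x j) j y -> Qu F Q (e b) y ->
  [/\ upd c j b ord0 = a0,
      (forall i : 'I_m.+1, (val i <= j)%N -> upd c j b i = c i),
      (forall i : 'I_m.+1, val i = j.+1 -> upd c j b i = b) &
      (forall i, (i <= j.+1)%N -> Iset F Q (e \o upd c j b) x i !=set0)].
Proof.
move=> hj c0 Hne Hy Hb.
have agree : forall i : 'I_m.+1, (val i <= j)%N -> upd c j b i = c i.
  move=> i hi; rewrite /upd; case: eqP => // hij; move: hi; rewrite hij ltnn //.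
have pref : forall i, (i <= j)%N -> Iset F Q (e \o upd c j b) x i = Iset F Q (e \o c) x i.
  move=> i hi; apply: Iset_prefix => l hl /=; rewrite agree //; apply: leq_trans hl hi.
split; [by rewrite agree | exact: agree | by move=> i hi; rewrite /upd hi eqxx|].
move=> i; rewrite leq_eqVlt => /orP [/eqP ->|]; last first.
  by rewrite ltnS => hi; rewrite pref //; apply: Hne.
exists y => /=; split.
  rewrite pref // (stepF_lt _ _ (ltnW hj)) /= agree //.
  by rewrite (stepF_lt _ _ (ltnW hj)) in Hy.
by rewrite (stepQ_lt _ hj) /= /upd /= eqxx.
Qed.

Lemma complete d : forall j c, (j + d = m)%N -> c ord0 = a0 ->
  (forall i, (i <= j)%N -> Iset F Q (e \o c) x i !=set0) ->
  exists c', (forall i : 'I_m.+1, (val i <= j)%N -> c' i = c i) /\ good c'.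
Proof.
elim: d => [|d IH] j c hjd c0 Hne.
  exists c; split => //; split => // i hi; apply: Hne; rewrite -(addn0 j) hjd -ltnS //.
have hj : (j.+1 < m.+1)%N by rewrite -hjd addnS !ltnS leq_addr.
have [z hz] := Hne j (leqnn j).
have hzQ := Iset_subQ' (ltnW hj) c0 hz.
have [y hy] := HF z (e (c (Ordinal (ltnW hj)))).
have [b hb] : exists b, Qu F Q (e b) y by apply: cover_pt; apply: hzQ.2.
have hstep : stepF F (e \o c) (Iset F Q (e \o c) x j) j y.
  by rewrite (stepF_lt _ _ (ltnW hj)); exists z.
have [u0 ag _ ne] := upd_lem hj c0 Hne hstep hb.
have [c' [ag' gd]] := IH j.+1 (upd c j b) ltac:(by rewrite addSnnS) u0 ne.
exists c'; split => // i hi; rewrite ag' ?(ag i hi) //; exact: leqW.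
Qed.

End Span2.

Lemma spanning_paths m :
  spanning F Q ((fun c : {ffun 'I_m.+1 -> 'I_k} => e \o c) @` [set c | validb c]).
Proof.
move=> x Qx.
have [a0 hx] := cover_pt Qx.
pose S := [set w : 'I_m.+1 -> U | exists c, w = e \o c /\ good x a0 c].
have Hne0 : forall c : 'I_m.+1 -> 'I_k, forall i, (i <= 0)%N -> Iset F Q (e \o c) x i !=set0.
  by move=> c i; rewrite leqn0 => /eqP ->; exists x.
have ordK : forall (j : 'I_m.+1) (h : (val j < m.+1)%N), Ordinal h = j.
  by move=> j h; apply: val_inj.
have hQS : adm_point F Q S x.
  split => // w [c [-> [c0 gd]]].
  split; [|split].
  - move=> i hj y Hy.
    have Hy' := Hy.
    rewrite (stepF_lt _ _ (ltnW hj)) in Hy; case: Hy => z hz hFz.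
    have hzQ := Iset_subQ' hx (ltnW hj) c0 hz.
    have [b hb] := cover_pt (hzQ.2 _ hFz).
    have Hne : forall i0, (i0 <= i)%N -> Iset F Q (e \o c) x i0 !=set0.
      move=> i0 hi0; apply: gd; apply: leq_ltn_trans hi0 (ltnW hj).
    have [u0 ag agb ne] := upd_lem hj c0 Hne Hy' hb.
    have [c' [ag' gd']] := @complete m x a0 hx (m - i.+1) i.+1 (upd c i b)
        (subnKC (hj : (i.+1 <= m)%N)) u0 ne.
    exists (e \o c').
      split; first by exists c'.
      move=> l hl /=; rewrite ag' ?(ag l hl) //; exact: leqW.
    by rewrite (stepQ_lt _ hj) /= ag' ?agb.
  - by move=> i hi; apply: gd.
  - move=> i hi y Hy.
    have h : (i < m.+1)%N by rewrite hi.
    rewrite (stepF_lt _ _ h) in Hy; case: Hy => z hz hFz.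
    exact: (Iset_subQ' hx h c0 hz).2 _ hFz.
exists S => //; split.
  move=> w [c [-> [c0 gd]]]; exists (finfun c); last first.
    by apply/funext => l /=; rewrite ffunE.
  rewrite /=; apply/forallP => i; apply/forallP => j; apply/implyP => /eqP hij.
  rewrite !ffunE; apply/asboolP.
  have := gd (val j) (ltn_ord j); rewrite {1}hij => -[z [hz1 hz2]].
  rewrite (stepF_lt _ _ (ltn_ord i)) ordK in hz1.
  rewrite -hij (stepQ_lt _ (ltn_ord j)) ordK in hz2.
  case: hz1 => x' hx' hF.
  exists x'; split.
    by have := Iset_subQ' hx (ltn_ord i) c0 hx'; rewrite ordK; apply.
  by exists z.
split; [|split].
- have [c' [_ gd]] := @complete m x a0 hx m 0 (fun _ => a0) (add0n m) erefl (Hne0 _).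
  by exists (e \o c'); exists c'.
- move=> w' w'' [c1 [-> [c10 _]]] [c2 [-> [c20 _]]] j hj /=.
  by rewrite (_ : j = ord0) ?c10 ?c20 //; apply: val_inj.
- by exists x.
Qed.

Local Close Scope classical_set_scope.
Fixpoint cntf (m : nat) (b : 'I_k) : nat :=
  if m is m'.+1 then \sum_(a < k) Eab a b * cntf m' a else 1.

Lemma card_last m b :
  (#|[set c : {ffun 'I_m.+1 -> 'I_k} | validb c && (c ord_max == b)]| <= cntf m b)%N.
Proof.
elim: m b => [|m IH] b.
  have H : [set c : {ffun 'I_1 -> 'I_k} | validb c && (c ord_max == b)] \subset [set [ffun=> b]].
    apply/fintype.subsetP => c; rewrite !inE => /andP [_ /eqP cb].
    apply/eqP/ffunP => i; rewrite ffunE -cb; congr (c _); apply: val_inj.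
    by case: i => [[]].
  by apply: leq_trans (subset_leq_card H) _; rewrite cards1.
pose sl : 'I_m.+2 := widen_ord (leqnSn m.+1) ord_max.
rewrite -sum1dep_card (partition_big (fun c : {ffun 'I_m.+2 -> 'I_k} => c sl) xpredT) //=.
apply: leq_sum => a _; rewrite sum1dep_card.
case Eb: (Eab a b); last first.
  rewrite mul0n leqn0 cards_eq0; apply/eqP/setP => c; rewrite !inE.
  apply/negbTE; apply/negP => /andP [/andP [/forallP /(_ sl) /forallP /(_ ord_max) hv /eqP cb] /eqP ca].
  by move: hv; rewrite /= eqxx /= ca cb Eb.
rewrite mul1n.
pose r := fun c : {ffun 'I_m.+2 -> 'I_k} => [ffun i : 'I_m.+1 => c (widen_ord (leqnSn m.+1) i)].
apply: leq_trans (IH a).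
rewrite -(@card_in_imset _ _ r); last first.
  move=> c1 c2; rewrite !inE => /andP [/andP [_ /eqP c1b] _] /andP [/andP [_ /eqP c2b] _] eq.
  apply/ffunP => i; case: (ltnP i m.+1) => h.
    have := congr1 (fun f : {ffun 'I_m.+1 -> 'I_k} => f (Ordinal h)) eq; rewrite !ffunE.
    by rewrite (_ : widen_ord _ _ = i) //; apply: val_inj.
  rewrite (_ : i = ord_max) ?c1b ?c2b //; apply: val_inj => /=.
  by apply/eqP; rewrite eqn_leq h -ltnS ltn_ord.
apply: subset_leq_card; apply/fintype.subsetP => y /imsetP [c]; rewrite !inE.
move=> /andP [/andP [hv _] /eqP ca] ->; apply/andP; split; last first.
  by rewrite ffunE -ca; apply/eqP; congr (c _); apply: val_inj.
apply/forallP => i; apply/forallP => j; apply/implyP => hij; rewrite !ffunE.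
by move: hv => /forallP /(_ (widen_ord (leqnSn m.+1) i)) /forallP /(_ (widen_ord (leqnSn m.+1) j)) /implyP; apply.
Qed.

Lemma card_valid m :
  (#|[set c : {ffun 'I_m.+1 -> 'I_k} | validb c]| <= \sum_b cntf m b)%N.
Proof.
rewrite -sum1dep_card (partition_big (fun c : {ffun 'I_m.+1 -> 'I_k} => c ord_max) xpredT) //=.
by apply: leq_sum => b _; rewrite sum1dep_card card_last.
Qed.
Local Open Scope classical_set_scope.
End Span.


Lemma has_card_img (T : finType) (V : Type) (P : pred T) (g : T -> V) :
  exists2 N, (N <= #|P|)%N & has_card (g @` [set x | P x]) N.
Proof.
pose B := [set x | P x && [forall y, (P y && (enum_rank y < enum_rank x)%N) ==> ~~ `[< g y = g x >]]]%SET.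
have BP : forall x, x \in B -> P x by move=> x; rewrite inE => /andP [].
exists #|B|.
  by apply: subset_leq_card; apply/fintype.subsetP => x /BP.
exists (fun i : 'I_#|B| => g (enum_val i)); split.
  move=> i j eq.
  have hi := enum_valP i; have hj := enum_valP j.
  apply: enum_val_inj.
  move: hi hj eq; set x := enum_val i; set y := enum_val j => hi hj eq.
  case: (ltngtP (enum_rank x) (enum_rank y)) => h.
  - move: hj; rewrite inE => /andP [_ /forallP /(_ x)].
    by rewrite (BP _ hi) h /= => /asboolPn.
  - move: hi; rewrite inE => /andP [_ /forallP /(_ y)].
    by rewrite (BP _ hj) h /= => /asboolPn; rewrite eq.
  - by apply: enum_rank_inj; apply: val_inj.
apply/seteqP; split.
  by move=> _ [i _ <-]; exists (enum_val i) => //; apply: BP; exact: enum_valP.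
move=> _ [x Px <-].
have Px' : P x && `[< g x = g x >] by rewrite Px; apply/asboolP.
case: (@arg_minnP T x (fun y => P y && `[< g y = g x >]) (fun y => nat_of_ord (enum_rank y)) Px').
move=> y /andP [Py /asboolP gy] miny.
have yB : y \in B.
  rewrite inE Py /=; apply/forallP => z; apply/implyP => /andP [Pz lt].
  apply/negP => /asboolP gz.
  have := miny z; rewrite Pz /= gz gy => /(_ ltac:(by apply/asboolP)).
  by rewrite leqNgt lt.
exists (enum_rank_in yB y) => //.
by rewrite enum_rankK_in.
Qed.


Section Ent.
Variable R : realType.
Local Open Scope ereal_scope.

Lemma limsup_le (u : (\bar R)^nat) l N :
  (forall n, (N <= n)%N -> u n <= l) -> limn_esup u <= l.
Proof.
move=> H; rewrite /limn_esup /limf_esup.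
apply: (@le_trans _ _ (ereal_sup (u @` [set n | (N <= n)%N]))).
  by apply: ereal_inf_lbound; exists [set n | (N <= n)%N] => //; exists N.
by apply: ge_ereal_sup => _ [n hn <-]; exact: H.
Qed.

Lemma r_inv_ge0 (X U : Type) (F : X -> U -> set X) n Q : 0 <= r_inv R F n Q.
Proof. by apply: le_ereal_inf_tmp => _ [k _ <-]; rewrite lee_fin ler0n. Qed.

Lemma hinv_bound (X U : Type) (F : X -> U -> set X) Q (s K : R) :
  (0 < s)%R -> (1 <= K)%R ->
  (forall m, r_inv R F m.+1 Q <= (K * s ^+ m.+1)%:E) ->
  h_inv R F Q <= (ln s / ln 2)%:E.
Proof.
move=> s0 K1 H; apply/lee_addgt0Pr => eps eps0.
have L2 : (0 < ln (2 : R))%R by apply: ln_gt0; rewrite ltr1n.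
have lK : (0 <= ln K)%R by apply: ln_ge0.
pose N := (Num.truncn (ln K / (ln 2 * eps))).+1.
apply: (@limsup_le _ _ N) => n hn.
case: n hn => [//|m] hn.
have r0 := r_inv_ge0 F m.+1 Q.
have hr := H m.
case E: (r_inv R F m.+1 Q) r0 hr => [t| |] r0 hr //.
rewrite lee_fin in r0 hr; rewrite /elog2.
case: eqP => [_|/eqP t0].
  by rewrite muleC gt0_mulNye ?leNye // lte_fin invr_gt0 ltr0n.
have tp : (0 < t)%R by rewrite lt_def t0.
have Ks : (0 < K * s ^+ m.+1)%R by rewrite mulr_gt0 ?exprn_gt0 //; lra.
have lt : (ln t <= ln K + ln s * m.+1%:R)%R.
  rewrite mulr_natr -lnXn // -lnM ?posrE ?exprn_gt0 //; last by lra.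
  by rewrite ler_ln ?posrE.
have hN : (ln K < m.+1%:R * (ln 2 * eps))%R.
  have h1 := Num.Theory.truncnS_gt (ln K / (ln 2 * eps)).
  rewrite ltr_pdivrMr ?mulr_gt0 // in h1.
  apply: (lt_le_trans h1); apply: ler_wpM2r; [by rewrite mulr_ge0 ?ltW | by rewrite ler_nat].
rewrite -EFinM -EFinD lee_fin.
have n0 : (0 < m.+1%:R :> R)%R by rewrite ltr0n.
have L2n : ln (2:R) != 0%R by rewrite gt_eqF.
have n0n : m.+1%:R != 0%R :> R by rewrite gt_eqF.
have e1 : (m.+1%:R^-1 * (ln t / ln 2) = ln t / (m.+1%:R * ln 2) :> R)%R.
  by rewrite invfM; ring.
have e2 : ((ln s / ln 2 + eps) * (m.+1%:R * ln 2) =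
           ln s * m.+1%:R + m.+1%:R * (ln 2 * eps) :> R)%R.
  by rewrite mulrDl mulrCA -mulrA mulVf // mulr1; ring.
rewrite e1 ler_pdivrMr ?mulr_gt0 // e2.
lra.
Qed.
End Ent.


Section G.
Variable R : realType.
Local Notation C := (R[i]).
Local Notation nc := (@Normc.normc R).

Lemma normc_sum (I : finType) (f : I -> C) : nc (\sum_i f i) <= \sum_i nc (f i).
Proof.
elim/big_rec2: _ => [|i y1 y2 _ h]; first by rewrite Normc.normc0.
by apply: le_trans (le_normcD _ _) _; rewrite lerD2l.
Qed.

Lemma normc_nat (N : nat) : nc (N%:R : C) = N%:R.
Proof. by rewrite normcMn Normc.normc1. Qed.

Lemma cntf_mat (X U : Type) (F : X -> U -> set X) Q k (e : 'I_k.+1 -> U) m b :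
  ((cntf F Q e m b)%:R : C) = \sum_a ((adm_matrix R F Q e) ^+ m) a b.
Proof.
elim: m b => [|m IH] b /=.
  rewrite expr0 (bigD1 b) //= big1 ?addr0; first by rewrite mxE eqxx.
  by move=> a /negbTE hab; rewrite mxE hab.
rewrite natr_sum.
under [RHS]eq_bigr => a _ do rewrite exprSr mxE.
rewrite exchange_big /=; apply: eq_bigr => a _.
rewrite -mulr_suml -IH natrM mulrC /adm_matrix mxE /Eab.
by case: (`[< _ >]).
Qed.

Lemma spec_facts k (M : 'M[C]_k) :
  0 <= spectral_radius M /\ forall z, eigenvalue M z -> nc z <= spectral_radius M.
Proof.
have hs : has_sup ([set 0%R] `|` [set Normc.normc l | l in [set l | eigenvalue M l]]).
  split; first by exists 0; left.
  case: k M => [|k] M.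
    exists 0 => _ [-> //|[l hl <-]].
    by move: hl; rewrite /= /eigenvalue flatmx0 eqxx.
  have [rs Hrs] := closed_field_poly_normal (char_poly M).
  rewrite (monicP (char_poly_monic M)) scale1r in Hrs.
  exists (\sum_(z <- rs) nc z) => _ [-> |[l hl <-]].
    by apply: sumr_ge0 => z _; apply: normc_ge0.
  have lr : l \in rs by rewrite -root_prod_XsubC -Hrs -eigenvalue_root_char.
  rewrite (big_rem l) //= lerDl; apply: sumr_ge0 => z _; apply: normc_ge0.
have ub := sup_upper_bound hs.
split; first by apply: ub; left.
by move=> z hz; apply: ub; right; exists z.
Qed.


Lemma hinv_le (X U : Type) (F : X -> U -> set X) (HF : forall x u, F x u !=set0)
  Q k (e : 'I_k -> U) (Hcov : is_cover F Q (range e)) (s : R) : 0 < s ->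
  (forall z, eigenvalue (adm_matrix R F Q e) z -> nc z < s) ->
  (h_inv R F Q <= (ln s / ln 2)%:E)%E.
Proof.
move=> s0 Hs.
have key : exists2 K, 1 <= K & forall m,
    ((\sum_b cntf F Q e m b)%:R <= K * s ^+ m.+1).
  case: k e Hcov Hs => [|k] e Hcov Hs.
    exists 1 => // m; rewrite big_ord0 mul1r exprn_ge0 // ltW //.
  have [D D0 HD] := mat_bound (ltW s0) Hs.
  exists (1 + (k.+1)%:R ^+ 2 * D / s).
    by rewrite lerDl divr_ge0 ?mulr_ge0 ?exprn_ge0 ?ler0n // ltW.
  move=> m.
  rewrite -normc_nat natr_sum.
  under eq_bigr => b _ do rewrite cntf_mat.
  apply: le_trans (normc_sum _) _.
  have H1 : \sum_(b < k.+1) nc (\sum_(a < k.+1) (adm_matrix R F Q e ^+ m) a b) <=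
            \sum_(b < k.+1) \sum_(a < k.+1) D * s ^+ m.
    apply: ler_sum => b _.
    apply: le_trans (normc_sum _) _.
    by apply: ler_sum => a _; apply: HD.
  apply: le_trans H1 _.
  rewrite !sumr_const !card_ord.
  have E2 : (D * s ^+ m) *+ k.+1 *+ k.+1 = (k.+1)%:R ^+ 2 * D * s ^+ m.
    by rewrite -mulrnA -[_ *+ _]mulr_natr natrM expr2; ring.
  rewrite E2 [s ^+ m.+1]exprS.
  have sn : 0 <= s ^+ m by rewrite exprn_ge0 ?ltW.
  set x := s ^+ m in sn *; set kk := (k.+1)%:R.
  rewrite (_ : (1 + kk ^+ 2 * D / s) * (s * x) = s * x + kk ^+ 2 * D * x); last first.
    by field; rewrite gt_eqF.
  by rewrite lerDr; apply: mulr_ge0 => //; apply: ltW.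
have [K K1 HK] := key.
apply: (hinv_bound s0 K1) => m.
have [N hN hc] := has_card_img (fun c : {ffun 'I_m.+1 -> 'I_k} => validb F Q e c)
   (fun c : {ffun 'I_m.+1 -> 'I_k} => e \o c).
apply: (@le_trans _ _ (N%:R)%:E).
  apply: ereal_inf_lbound; exists N => //; exists ((fun c : {ffun 'I_m.+1 -> 'I_k} => e \o c) @` [set c | validb F Q e c]); split => //.
  exact (spanning_paths HF Hcov m).
rewrite lee_fin; apply: le_trans (HK m); rewrite ler_nat.
apply: leq_trans hN _; apply: leq_trans (card_valid F Q e m).
by rewrite cardsE.
Qed.
End G.

Unset Implicit Arguments.
Local Close Scope ring_scope.
Local Open Scope ereal_scope.

Theorem corollary3p9 (R : realType) (X U : Type) (F : X -> U -> set X)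
    (HX : inhabited X) (HU : inhabited U)
    (HF : forall x u, F x u !=set0)
    (Q : set X) (HQ : controlled_invariant F Q) :
  h_inv R F Q <=
  ereal_inf [set elog2 (spectral_radius (adm_matrix R F Q (projT2 e)))%:E
            | e in [set e : {k : nat & 'I_k -> U} |
                     injective (projT2 e) /\ is_cover F Q (range (projT2 e))]].
Proof.
apply: le_ereal_inf_tmp => _ [[k e] /= [einj ecov] <-].
have [r0 rub] := spec_facts (adm_matrix R F Q e).
set rho := spectral_radius _ in r0 rub *.
have L2 : (0 < ln (2:R))%R by apply: ln_gt0; rewrite ltr1n.
have hb : forall s : R, (rho < s)%R -> h_inv R F Q <= (ln s / ln 2)%:E.
  move=> s hs; apply: (hinv_le HF ecov) => [|z hz]; first exact: le_lt_trans hs.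
  exact: le_lt_trans (rub z hz) hs.
rewrite /elog2; case: eqP => [r00|/eqP rn0].
  have H' : forall M0 : R, h_inv R F Q <= M0%:E.
    move=> M0; have := hb (expR (M0 * ln 2)); rewrite r00 expR_gt0 expRK mulfK; last first.
      by rewrite gt_eqF.
    by apply.
  case: (h_inv R F Q) H' => [r| |] H' //.
    by have := H' (r - 1)%R; rewrite lee_fin => h; exfalso; lra.
  by have := H' 0%R.
have rp : (0 < rho)%R by rewrite lt_def rn0 r0.
apply/lee_addgt0Pr => eps eps0.
have := hb (rho * expR (eps * ln 2))%R.
rewrite lnM ?posrE ?expR_gt0 // expRK.
rewrite (_ : ((ln rho + eps * ln 2) / ln 2 = ln rho / ln 2 + eps)%R); last first.
  by field; rewrite gt_eqF.
rewrite EFinD; apply.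
by rewrite -[X in (X < _)%R]mulr1 ltr_pM2l // expR_gt1 mulr_gt0.
Qed.
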